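(* Let $\epsilon\in(0,1]$, let $G$ be a finite group, $\alpha$ an automorphism of $G$, and $S:=\{g\in G:\alpha(g)=g^{-1}\}$. If $s,t\in S$ satisfy $|sS\cap tS|\geq\epsilon|G|$, then $|C_G(st^{-1})|\geq\epsilon|G|$, where $C_G(x)$ denotes the centralizer of $x$ in $G$.
   Context: For $s\in G$ and $S\subseteq G$, $sS=\{sx:x\in S\}$ is the left translate. *)

(* Defs.v *)
From HB Require Import structures.
From mathcomp Require Import all_boot all_order all_algebra all_fingroup.
Set Implicit Arguments. Unset Strict Implicit. Unset Printing Implicit Defensive.

Definition inv_set (gT : finGroupType) (G : {set gT}) (alpha : gT -> gT) : {set gT} :=
  [set g in G | alpha g == g^-1]%g.

(* Main.v *)
Require Import Defs.
From HB Require Import structures.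
From mathcomp Require Import all_boot all_order all_algebra all_fingroup.
Import Order.TTheory GRing.Theory Num.Theory.
Local Open Scope ring_scope.

Lemma key (gT : finGroupType) (G : {group gT})
  (alpha : {morphism G >-> gT}) (s t : gT)
  (hs : s \in inv_set G alpha) (ht : t \in inv_set G alpha) :
  ((s *: inv_set G alpha) :&: (t *: inv_set G alpha) \subset 'C_G[s * t^-1])%g.
Proof.
move: hs ht; rewrite !inE => /andP[Gs /eqP as_] /andP[Gt /eqP at_].
apply/subsetP => x Hx; have [h1 h2] := setIP Hx; rewrite !mem_lcoset !inE in h1 h2.
move: h1 h2 => /andP[Gsx /eqP ax] /andP[Gtx /eqP bx].
have Gx : x \in G by rewrite -(mulKVg s x) groupM.
apply/setIP; split => //; apply/cent1P.
rewrite morphM ?groupV // morphV // as_ invgK invMg invgK in ax.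
rewrite morphM ?groupV // morphV // at_ invgK invMg invgK in bx.
have e1 : alpha x = (s^-1 * x^-1 * s)%g by rewrite -mulgA -ax mulKg.
have e2 : alpha x = (t^-1 * x^-1 * t)%g by rewrite -mulgA -bx mulKg.
have e : (s^-1 * x * s = t^-1 * x * t)%g.
  by apply: invg_inj; rewrite !invMg !invgK !mulgA -e1 e2.
rewrite /commute.
transitivity (s * (s^-1 * x * s) * t^-1)%g; first by rewrite !mulgA mulgV mul1g.
by rewrite e !mulgA mulgK.
Qed.

Theorem lemma5 (R : realFieldType) (eps : R) (gT : finGroupType) (G : {group gT})
  (alpha : {morphism G >-> gT}) (Halpha : isom G G alpha)
  (heps0 : 0 < eps) (heps1 : eps <= 1) (s t : gT)
  (hs : s \in inv_set G alpha) (ht : t \in inv_set G alpha)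
  (hst : eps * (#|G|%:R) <= (#|((s *: inv_set G alpha) :&: (t *: inv_set G alpha))%g|%:R))
  : eps * (#|G|%:R) <= (#|('C_G[s * t^-1])%g|%:R).
Proof.
apply: (le_trans hst); rewrite ler_nat; apply: subset_leq_card; exact: key.
Qed.
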